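(* Let $m \geq 0$, $n \geq 1$ be integers and let $c = (c^t; c^b)$ be a sorted deterministically recurrent configuration on $K_{m,n}^0$. Run the following algorithm: let $T$ be the stack $(c^t_1, \ldots, c^t_m, n-1)$ and $B$ the stack $(c^b_1, \ldots, c^b_n)$, each with head its first (smallest) element, and let $w$ be the empty word. While both $T$ and $B$ are non-empty: (a) while $\mathrm{head}(T) > 0$ and $\mathrm{head}(B) > 0$, append $U$ to $w$ and decrease every entry of $T$ and of $B$ by $1$; (b) then, if $0 = \mathrm{head}(T) < \mathrm{head}(B)$, remove the head of $T$, append $H^E$ to $w$, and decrease every entry of $B$ by $1$; else if $0 = \mathrm{head}(B) < \mathrm{head}(T)$, remove the head of $B$, append $H^N$ to $w$, and decrease every entry of $T$ by $1$; else (both heads equal $0$) remove the heads of both $T$ and $B$ and append $D$ to $w$. After the loop, delete the final step (a $D$) of $w$ and output the resulting word $w(c)$. Then $w(c) = \Xi(\Phi(c))$; that is, $c \mapsto w(c)$ is the bijection $\Xi \circ \Phi$ from sorted deterministically recurrent configurations on $K_{m,n}^0$ to $\mathrm{Motz}_{m,n-1}$. Moreover, $\mathrm{level}(c) = \mathrm{Area}(w(c))$.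
   Context: $K_{m,n}^0$ is the complete bipartite graph with ''top'' vertices $v^t_0, \ldots, v^t_m$ and ''bottom'' vertices $v^b_1, \ldots, v^b_n$, with an edge between every top and every bottom vertex; $v^t_0$ is the sink. A configuration is a vector $c = (c^t_1, \ldots, c^t_m; c^b_1, \ldots, c^b_n)$ of non-negative integers; it is sorted if $c^t$, $c^b$ are weakly increasing, stable if $c^t_i < n$ and $c^b_j < m+1$ for all $i,j$. Abelian sandpile model (ASM): an unstable non-sink vertex topples by sending one grain to each neighbour (bottom vertices also to the sink); grains sent to the sink disappear. In the Markov chain on stable configurations which adds a grain to a uniformly random non-sink vertex and stabilises by the ASM, a stable configuration is deterministically recurrent if it is a recurrent state. The level is $\mathrm{level}(c) := \sum_i c^t_i + \sum_j c^b_j - mn$. Labelled Motzkin paths: words in steps $U=(1,1)$, $D=(1,-1)$ and horizontal steps $H^N, H^E$ (both $=(1,0)$), starting and ending at height $0$ and never going below the $x$-axis; $\mathrm{Area}(w)$ is the area between the path and the $x$-axis. $\mathrm{Motz}_{m,n-1}$ is the set of such paths with $m+n-1$ steps, exactly $m$ of which are $U$ or $H^E$. A parallelogram polyomino in the box $[0,m+1]\times[0,n]$ is the set of unit cells between two lattice paths $\mathcal{U}$ (upper) and $\mathcal{L}$ (lower) from $(0,0)$ to $(m+1,n)$ with steps $N=(0,1)$, $E=(1,0)$, meeting only at their endpoints; necessarily $\mathcal{U} = (N, u_1, \ldots, u_{m+n-1}, E)$ and $\mathcal{L} = (E, \ell_1, \ldots, \ell_{m+n-1}, N)$. The map $\Xi$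 sends such a polyomino to $w_1 \cdots w_{m+n-1}$ with $w_i = U$ if $(u_i,\ell_i) = (N,E)$, $w_i = H^N$ if $(u_i,\ell_i)=(N,N)$, $w_i = H^E$ if $(u_i,\ell_i) = (E,E)$, $w_i = D$ if $(u_i,\ell_i) = (E,N)$; it is known to be a bijection onto $\mathrm{Motz}_{m,n-1}$. The Dukes–Le Borgne map $\Phi$: for a sorted stable $c$, $\mathcal{U}(c^t)$ is the path from $(0,0)$ to $(m+1,n)$ whose $E$ steps occur at heights $1+c^t_1, \ldots, 1+c^t_m, n$, and $\mathcal{L}(c^b)$ the path from $(0,0)$ to $(m+1,n)$ whose $N$ steps occur at $x$-coordinates $1+c^b_1, \ldots, 1+c^b_n$; $\Phi(c)$ is the polyomino between them. It is known that $\Phi$ is a bijection from sorted deterministically recurrent configurations on $K_{m,n}^0$ to parallelogram polyominoes in $[0,m+1]\times[0,n]$. *)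

(* Defs.v *)
From mathcomp Require Import all_boot all_order all_algebra.
Set Implicit Arguments.
Unset Strict Implicit.
Unset Printing Implicit Defensive.
Import Order.TTheory GRing.Theory Num.Theory.

(* Configurations on K_{m,n}^0: c = (c^t, c^b), c^t of size m          *)
(* (top non-sink vertices v^t_1..v^t_m), c^b of size n (bottom).       *)
(* Indices are 0-based: entry i of c^t is c^t_{i+1}.                   *)
Definition config := (seq nat * seq nat)%type.

Definition is_config (m n : nat) (c : config) : bool :=
  (size c.1 == m) && (size c.2 == n).

Definition sorted_config (c : config) : bool :=
  sorted leq c.1 && sorted leq c.2.

(* top vertices have degree n, bottom vertices degree m+1 *)
Definition stable_config (m n : nat) (c : config) : bool :=
  all (fun x => x < n) c.1 && all (fun x => x < m.+1) c.2.

(* non-sink vertices *)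
Inductive vertex := VTop of nat | VBot of nat.

Definition valid_vertex (m n : nat) (v : vertex) : bool :=
  match v with VTop i => i < m | VBot j => j < n end.

Definition unstable_at (m n : nat) (c : config) (v : vertex) : bool :=
  match v with
  | VTop i => n <= nth 0 c.1 i
  | VBot j => m.+1 <= nth 0 c.2 j
  end.

Definition topple (m n : nat) (c : config) (v : vertex) : config :=
  match v with
  | VTop i => (set_nth 0 c.1 i (nth 0 c.1 i - n), map S c.2)
  | VBot j => (map S c.1, set_nth 0 c.2 j (nth 0 c.2 j - m.+1))
    (* the grain sent to the sink v^t_0 disappears *)
  end.

Inductive topple_reach (m n : nat) : config -> config -> Prop :=
  | tr_refl c : topple_reach m n c c
  | tr_step c v d : valid_vertex m n v -> unstable_at m n c v ->
      topple_reach m n (topple m n c v) d -> topple_reach m n c d.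

Definition stabilises_to (m n : nat) (c d : config) : Prop :=
  topple_reach m n c d /\ stable_config m n d.

Definition add_grain (c : config) (v : vertex) : config :=
  match v with
  | VTop i => (set_nth 0 c.1 i (nth 0 c.1 i).+1, c.2)
  | VBot j => (c.1, set_nth 0 c.2 j (nth 0 c.2 j).+1)
  end.

(* one transition of positive probability of the Markov chain on stable
   configurations: add a grain at some non-sink vertex and stabilise *)
Definition mc_step (m n : nat) (c d : config) : Prop :=
  exists v, valid_vertex m n v /\ stabilises_to m n (add_grain c v) d.

Inductive mc_reach (m n : nat) : config -> config -> Prop :=
  | mr_refl c : mc_reach m n c c
  | mr_step c c' d : mc_step m n c c' -> mc_reach m n c' d -> mc_reach m n c d.

(* recurrent state of the (finite) Markov chain: every state reachable
   from c can reach c back *)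
Definition det_recurrent (m n : nat) (c : config) : Prop :=
  is_config m n c /\ stable_config m n c /\
  forall d, mc_reach m n c d -> mc_reach m n d c.

Definition sorted_recurrent (m n : nat) (c : config) : Prop :=
  sorted_config c /\ det_recurrent m n c.

Definition level (m n : nat) (c : config) : int :=
  (sumn c.1 + sumn c.2)%:Z - (m * n)%:Z.

Inductive mstep := U | D | HN | HE.

Definition next_height (h : nat) (s : mstep) : nat :=
  match s with U => h.+1 | D => h.-1 | _ => h end.

Fixpoint motz_ok (h : nat) (w : seq mstep) : bool :=
  match w with
  | [::] => h == 0
  | U :: w' => motz_ok h.+1 w'
  | D :: w' => (0 < h) && motz_ok h.-1 w'
  | _ :: w' => motz_ok h w'
  end.

Definition is_UorHE (s : mstep) : bool :=
  match s with U | HE => true | _ => false end.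

(* Motz_{m,n-1}: m+n-1 steps, exactly m of which are U or H^E *)
Definition in_Motz (m n : nat) (w : seq mstep) : bool :=
  [&& size w == m + n - 1, count is_UorHE w == m & motz_ok 0 w].

(* twice the area under the path started at height h: the step from
   height h to h' contributes the trapezoid (h + h')/2 *)
Fixpoint area2 (h : nat) (w : seq mstep) : nat :=
  match w with
  | [::] => 0
  | s :: w' => (h + next_height h s) + area2 (next_height h s) w'
  end.

Definition Area (w : seq mstep) : rat := (area2 0 w)%:R / 2%:R.

Inductive lstep := N | E.

(* path from height cur whose successive E steps occur at heights hs *)
Fixpoint upper_path (cur : nat) (hs : seq nat) : seq lstep :=
  match hs with
  | [::] => [::]
  | h :: hs' => nseq (h - cur) N ++ E :: upper_path h hs'
  end.

(* path from x-coordinate cur whose successive N steps occur at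
   x-coordinates xs, ending at x-coordinate xend *)
Fixpoint lower_path (xend cur : nat) (xs : seq nat) : seq lstep :=
  match xs with
  | [::] => nseq (xend - cur) E
  | x :: xs' => nseq (x - cur) E ++ N :: lower_path xend x xs'
  end.

(* a polyomino is given by its (upper, lower) boundary paths *)
Definition polyomino := (seq lstep * seq lstep)%type.

Definition upper_of (n : nat) (ct : seq nat) : seq lstep :=
  upper_path 0 (map S ct ++ [:: n]).

Definition lower_of (m : nat) (cb : seq nat) : seq lstep :=
  lower_path m.+1 0 (map S cb).

Definition Phi (m n : nat) (c : config) : polyomino :=
  (upper_of n c.1, lower_of m c.2).

(* u_1 .. u_{m+n-1}: drop the first and last steps *)
Definition inner_steps (s : seq lstep) : seq lstep :=
  take (size s).-2 (behead s).

Definition xi_letter (p : lstep * lstep) : mstep :=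
  match p with
  | (N, E) => U
  | (N, N) => HN
  | (E, E) => HE
  | (E, N) => D
  end.

Definition Xi (P : polyomino) : seq mstep :=
  map xi_letter (zip (inner_steps P.1) (inner_steps P.2)).

(* step (a): while head T > 0 and head B > 0, append U and decrement
   every entry of T and B (fuel is any sufficiently large bound) *)
Fixpoint loop_a (fuel : nat) (T B : seq nat) (w : seq mstep)
  : seq nat * seq nat * seq mstep :=
  match fuel with
  | 0 => (T, B, w)
  | f.+1 =>
    match T, B with
    | t :: _, b :: _ =>
      if (0 < t) && (0 < b)
      then loop_a f (map predn T) (map predn B) (rcons w U)
      else (T, B, w)
    | _, _ => (T, B, w)
    end
  end.

Definition step_b (T B : seq nat) (w : seq mstep)
  : seq nat * seq nat * seq mstep :=
  match T, B with
  | t :: T', b :: B' =>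
    if (t == 0) && (0 < b) then (T', map predn B, rcons w HE)
    else if (b == 0) && (0 < t) then (map predn T, B', rcons w HN)
    else (T', B', rcons w D)
  | _, _ => (T, B, w)
  end.

(* the outer while loop: each iteration removes at least one entry, so
   size T + size B + 1 iterations suffice; loop (a) performs at most
   sumn T iterations *)
Fixpoint outer_loop (fuel : nat) (T B : seq nat) (w : seq mstep)
  : seq mstep :=
  match fuel with
  | 0 => w
  | f.+1 =>
    if (T != [::]) && (B != [::]) then
      let: (T1, B1, w1) := loop_a (sumn T).+1 T B w in
      let: (T2, B2, w2) := step_b T1 B1 w1 in
      outer_loop f T2 B2 w2
    else w
  end.

Definition run_algorithm (n : nat) (c : config) : seq mstep :=
  let T := rcons c.1 n.-1 in
  let B := c.2 in
  outer_loop (size T + size B).+1 T B [::].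

Definition w_of (n : nat) (c : config) : seq mstep :=
  let w := run_algorithm n c in take (size w).-1 w.

(* Main.v *)
Require Import Defs.
From mathcomp Require Import all_boot all_order all_algebra.
From mathcomp Require Import zify lra.
Set Implicit Arguments. Unset Strict Implicit. Unset Printing Implicit Defensive.


Lemma nth_mapS (s : seq nat) i : nth 0 (map S s) i = if i < size s then (nth 0 s i).+1 else 0.
Proof. by case: ltnP => H; [rewrite (nth_map 0) | rewrite nth_default ?size_map]. Qed.

Lemma nth_setn (s : seq nat) i y k : nth 0 (set_nth 0 s i y) k = if k == i then y else nth 0 s k.
Proof. by rewrite nth_set_nth. Qed.

Lemma size_setn (s : seq nat) i y : i < size s -> size (set_nth 0 s i y) = size s.
Proof. by move=> H; rewrite size_set_nth; apply/maxn_idPr. Qed.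

Ltac nsimp := rewrite ?(nth_setn, nth_mapS, size_set_nth, size_map).

Lemma sumn_setn (s : seq nat) i y : i < size s -> sumn (set_nth 0 s i y) + nth 0 s i = sumn s + y.
Proof.
elim: s i => [|x s IH] [|i] //= hi; first lia.
have := IH i hi; lia.
Qed.

Lemma sumn_mapS (s : seq nat) : sumn (map S s) = sumn s + size s.
Proof. elim: s => //= x s IH; lia. Qed.

Lemma count_setn (a : pred nat) (s : seq nat) i y : i < size s ->
  count a (set_nth 0 s i y) + a (nth 0 s i) = count a s + a y.
Proof.
elim: s i => [|x s IH] [|i] //= hi; first lia.
have := IH i hi; lia.
Qed.

Lemma count_mapS (s : seq nat) Q : 0 < Q ->
  count (fun x => x < Q) (map S s) = count (fun x => x < Q.-1) s.
Proof. by case: Q => // Q _; rewrite count_map; apply: eq_count => x; rewrite /= ltnS. Qed.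

Lemma count_lt0 (s : seq nat) : count (fun x => x < 0) s = 0.
Proof. by elim: s. Qed.

Lemma count_mono (s : seq nat) a b : a <= b -> count (fun x => x < a) s <= count (fun x => x < b) s.
Proof. move=> hab; apply: sub_count => x /= hx; lia. Qed.

Lemma sumn_le (s1 s2 : seq nat) : size s1 = size s2 -> (forall i, nth 0 s1 i <= nth 0 s2 i) -> sumn s1 <= sumn s2.
Proof.
elim: s1 s2 => [|x s1 IH] [|y s2] //= [hs] H.
have := H 0; have := IH s2 hs (fun i => H i.+1); simpl; lia.
Qed.

Lemma count_sorted (s : seq nat) P Q : sorted leq s -> 0 < P -> P <= size s ->
  nth 0 s P.-1 < Q -> P <= count (fun x => x < Q) s.
Proof.
move=> hs hP hPs hq.
rewrite -(cat_take_drop P s) count_cat.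
have : count (fun x => x < Q) (take P s) = P.
  have hsz : size (take P s) = P by rewrite size_take; case: ltnP => //; lia.
  apply/eqP; rewrite -{2}hsz -all_count; apply/(all_nthP 0) => k hk.
  rewrite size_take in hk; have hk' : k < P by move: hk; case: (ltnP P (size s)) => //; lia.
  rewrite nth_take //=.
  apply: leq_ltn_trans hq; apply: (sorted_leq_nth leq_trans leqnn) => //; rewrite /in_mem /=; lia.
lia.
Qed.

Section Sand.
Variables m n : nat.
Hypothesis hn : 0 < n.

Definition sized (c : config) := size c.1 = m /\ size c.2 = n.

Lemma topple_sized c v : sized c -> valid_vertex m n v -> sized (topple m n c v).
Proof.
case: c => t b; case: v => i [/= h1 h2] hv; rewrite /sized /= ?size_map ?size_setn //; lia.
Qed.

Lemma add_sized c v : sized c -> valid_vertex m n v -> sized (add_grain c v).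
Proof.
case: c => t b; case: v => i [/= h1 h2] hv; rewrite /sized /= ?size_setn //; lia.
Qed.

Definition veq (v w : vertex) : bool :=
  match v, w with
  | VTop i, VTop j => i == j
  | VBot i, VBot j => i == j
  | _, _ => false end.

Lemma veqP v w : reflect (v = w) (veq v w).
Proof.
case: v; case: w => i j /=; try (by constructor);
  (apply: (iffP eqP) => [->|[]] //).
Qed.

Lemma unstable_topple c v w : sized c -> valid_vertex m n v -> valid_vertex m n w ->
  v <> w -> unstable_at m n c w -> unstable_at m n (topple m n c v) w.
Proof.
case: c => t b [/= h1 h2]; case: v => i; case: w => j /= hv hw hne; nsimp;
  try (case: eqP => [E|]; [subst; by case: hne|]); try (case: ifP => //; lia); by [].
Qed.

Lemma unstable_add c u v : sized c -> unstable_at m n c v -> unstable_at m n (add_grain c u) v.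
Proof.
case: c => t b [/= h1 h2]; case: u => i; case: v => j /=; nsimp => //;
  case: eqP => [->|] //; lia.
Qed.

Lemma topple_comm c v w : sized c -> valid_vertex m n v -> valid_vertex m n w ->
  unstable_at m n c v -> unstable_at m n c w ->
  topple m n (topple m n c v) w = topple m n (topple m n c w) v.
Proof.
case: c => t b [/= h1 h2]; case: v => i; case: w => j /= hv hw u1 u2;
  congr (_, _); apply: (@eq_from_nth _ 0); nsimp; rewrite ?h1 ?h2 //; try lia;
  move=> k hk; nsimp; rewrite ?h1 ?h2;
  repeat (case: eqP => //=; intros; subst); repeat (case: ltnP => //=; intros); lia.
Qed.

Lemma topple_add c u v : sized c -> valid_vertex m n u -> valid_vertex m n v ->
  unstable_at m n c v ->
  topple m n (add_grain c u) v = add_grain (topple m n c v) u.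
Proof.
case: c => t b [/= h1 h2]; case: u => i; case: v => j /= hv hw u1;
  congr (_, _); apply: (@eq_from_nth _ 0); nsimp; rewrite ?h1 ?h2 //; try lia;
  move=> k hk; nsimp; rewrite ?h1 ?h2;
  repeat (case: eqP => //=; intros; subst); repeat (case: ltnP => //=; intros); lia.
Qed.


Lemma stable_nu c v : sized c -> stable_config m n c -> valid_vertex m n v ->
  ~~ unstable_at m n c v.
Proof.
case: c => t b [/= h1 h2] /andP [/(all_nthP 0) Ht /(all_nthP 0) Hb].
case: v => i /= hi; rewrite -ltnNge; [apply: Ht|apply: Hb]; rewrite /=; lia.
Qed.

Lemma tr_stable c d : sized c -> stable_config m n c -> topple_reach m n c d -> d = c.
Proof.
move=> hs hst H; case: H hs hst => // c' v d' hv hu _ hs hst.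
by move: (stable_nu hs hst hv); rewrite hu.
Qed.

Lemma tr_sized c d : topple_reach m n c d -> sized c -> sized d.
Proof. elim => // c' v d' hv hu _ IH hs; apply: IH; exact: topple_sized. Qed.

Lemma tr_trans a b c : topple_reach m n a b -> topple_reach m n b c -> topple_reach m n a c.
Proof. elim => // a' v b' hv hu _ IH hbc; apply: tr_step hv hu (IH hbc). Qed.

Lemma confl1 c s : topple_reach m n c s -> stable_config m n s -> sized c ->
  forall v, valid_vertex m n v -> unstable_at m n c v -> topple_reach m n (topple m n c v) s.
Proof.
elim => [c' hst hs v hv hu | c' w d hw huw hr IH hst hs v hv hu].
  by move: (stable_nu hs hst hv); rewrite hu.
case: (veqP w v) => [<- //|hne].
have hu' : unstable_at m n (topple m n c' w) v by apply: unstable_topple.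
have := IH hst (topple_sized hs hw) v hv hu'.
rewrite -topple_comm //; apply: tr_step => //.
apply: unstable_topple => //; by move=> E; apply: hne.
Qed.

Lemma confl c s a : topple_reach m n c s -> stable_config m n s -> sized c ->
  topple_reach m n c a -> topple_reach m n a s.
Proof.
move=> hcs hst hs hca; elim: hca hcs hs => // c' v d hv hu _ IH hcs hs.
apply: IH; [exact: confl1| exact: topple_sized].
Qed.





Lemma find_unstable c : sized c -> ~~ stable_config m n c ->
  exists v, valid_vertex m n v /\ unstable_at m n c v.
Proof.
case: c => t b [/= h1 h2]; rewrite /stable_config negb_and -!has_predC => /orP [].
  move/(has_nthP 0) => [i hi H]; simpl in hi; exists (VTop i); move: H; rewrite /= -leqNgt; split => /=; lia.
move/(has_nthP 0) => [i hi H]; simpl in hi; exists (VBot i); move: H; rewrite /= -leqNgt; split => /=; lia.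
Qed.

Lemma exists_stab k c : sized c -> m.+1 * (sumn c.1 + sumn c.2) + sumn c.1 < k ->
  exists d, topple_reach m n c d /\ stable_config m n d.
Proof.
elim: k c => // k IH c hs hk.
case hst: (stable_config m n c); first by exists c; split => //; constructor.
have [v [hv hu]] := find_unstable hs (negbT hst).
have hs' := topple_sized hs hv.
have [d [hd1 hd2]] : exists d, topple_reach m n (topple m n c v) d /\ stable_config m n d.
  apply: IH => //.
  move: hs hu hv hk; case: c {hst hs'} => t b [/= h1 h2]; case: v => i /= hu hv hk.
    have := sumn_setn (nth 0 t i - n) (_ : i < size t); rewrite sumn_mapS; nia.
  have := sumn_setn (nth 0 b i - m.+1) (_ : i < size b); rewrite sumn_mapS; nia.
by exists d; split => //; apply: tr_step hd1.
Qed.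


Definition add_grains (c : config) (vs : seq vertex) := foldl add_grain c vs.

Lemma adds_sized vs c : sized c -> all (valid_vertex m n) vs -> sized (add_grains c vs).
Proof.
elim: vs c => //= v vs IH c hs /andP [hv hvs]; apply: IH => //; exact: add_sized.
Qed.

Lemma tr_add1 a b u : topple_reach m n a b -> sized a -> valid_vertex m n u ->
  topple_reach m n (add_grain a u) (add_grain b u).
Proof.
elim => [c|c v d hv hu _ IH] hs hu'; first by constructor.
apply: (tr_step (v := v)) => //; first exact: unstable_add.
rewrite topple_add //; apply: IH => //; exact: topple_sized.
Qed.

Lemma tr_adds vs a b : topple_reach m n a b -> sized a -> all (valid_vertex m n) vs ->
  topple_reach m n (add_grains a vs) (add_grains b vs).
Proof.
elim: vs a b => //= v vs IH a b hab hs /andP [hv hvs].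
apply: IH => //; [exact: tr_add1 | exact: add_sized].
Qed.

Lemma mc_trans a b c : mc_reach m n a b -> mc_reach m n b c -> mc_reach m n a c.
Proof. elim => // a' b' c' h _ IH hc; apply: mr_step h (IH hc). Qed.

Lemma decompose vs a s : sized a -> stable_config m n a -> all (valid_vertex m n) vs ->
  topple_reach m n (add_grains a vs) s -> stable_config m n s -> mc_reach m n a s.
Proof.
elim: vs a => [|v vs IH] a hs hst /=.
  by move=> _ H hs'; rewrite (tr_stable hs hst H); constructor.
move=> /andP [hv hvs] H hss.
have hs1 := add_sized hs hv.
have [a1 [h1 h2]] := exists_stab (k := (m.+1 * (sumn (add_grain a v).1 + sumn (add_grain a v).2) + sumn (add_grain a v).1).+1) hs1 (ltnSn _).
apply: (mr_step (c' := a1)); first by exists v.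
apply: IH => //; first exact: tr_sized h1 hs1.
apply: (confl H) => //; first exact: adds_sized.
exact: tr_adds.
Qed.

Lemma mc_inv a d : mc_reach m n a d -> sized a -> stable_config m n a ->
  sized d /\ stable_config m n d.
Proof.
elim => // c c' d' [v [hv [h1 h2]]] _ IH hs hst; apply: IH => //.
exact: tr_sized h1 (add_sized hs hv).
Qed.

Definition cle (a e : config) := (forall i, nth 0 a.1 i <= nth 0 e.1 i) /\ (forall j, nth 0 a.2 j <= nth 0 e.2 j).



Lemma cle_stable a e : sized a -> sized e -> cle a e -> stable_config m n e -> stable_config m n a.
Proof.
case: a => t b; case: e => t' b' [/= h1 h2] [/= h1' h2'] [/= H1 H2] /andP [/(all_nthP 0) A /(all_nthP 0) B].
apply/andP; split; apply/(all_nthP 0) => i hi.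
  have := A i; rewrite /= h1'; have := H1 i; simpl in hi; lia.
have := B i; rewrite /= h2'; have := H2 i; simpl in hi; lia.
Qed.

Lemma raise_step a e : sized a -> sized e -> cle a e -> a <> e ->
  exists v, valid_vertex m n v /\ cle (add_grain a v) e.
Proof.
case: a => t b; case: e => t' b' [/= h1 h2] [/= h1' h2'] [/= H1 H2] hne.
case E1: (has (fun i => nth 0 t i < nth 0 t' i) (iota 0 m)).
  move/hasP: E1 => [i]; rewrite mem_iota => /andP [_ hi] /= hlt.
  exists (VTop i); split => //; split => k /=; nsimp => //.
  by case: eqP => [->|] // _.
case E2: (has (fun i => nth 0 b i < nth 0 b' i) (iota 0 n)).
  move/hasP: E2 => [i]; rewrite mem_iota => /andP [_ hi] /= hlt.
  exists (VBot i); split => //; split => k /=; nsimp => //.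
  by case: eqP => [->|] // _.
exfalso; apply: hne; congr (_, _); apply: (@eq_from_nth _ 0); rewrite ?h1 ?h2 ?h1' ?h2' // => i hi.
  apply/eqP; rewrite eqn_leq H1 /= leqNgt; apply/negP => hlt.
  move/negP: E1; apply; apply/hasP; exists i => //; rewrite mem_iota; lia.
apply/eqP; rewrite eqn_leq H2 /= leqNgt; apply/negP => hlt.
move/negP: E2; apply; apply/hasP; exists i => //; rewrite mem_iota; lia.
Qed.

Lemma add_sum a v : sized a -> valid_vertex m n v ->
  sumn (add_grain a v).1 + sumn (add_grain a v).2 = (sumn a.1 + sumn a.2).+1.
Proof.
case: a => t b [/= h1 h2]; case: v => i /= hi.
  have := sumn_setn (nth 0 t i).+1 (_ : i < size t); lia.
have := sumn_setn (nth 0 b i).+1 (_ : i < size b); lia.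
Qed.

Lemma cle_sum a e : sized a -> sized e -> cle a e -> sumn a.1 + sumn a.2 <= sumn e.1 + sumn e.2.
Proof.
case: a => t b; case: e => t' b' [/= h1 h2] [/= h1' h2'] [/= H1 H2].
have := sumn_le (_ : size t = size t') H1; have := sumn_le (_ : size b = size b') H2; lia.
Qed.

Lemma raise_mc k a e : sumn e.1 + sumn e.2 - (sumn a.1 + sumn a.2) < k ->
  sized a -> sized e -> cle a e -> stable_config m n e -> mc_reach m n a e.
Proof.
elim: k a => // k IH a hk hs hse hle hst.
case: (eqVneq a e) => [->|hne]; first by constructor.
have hne' : a <> e by move=> E; rewrite E eqxx in hne.
have [v [hv hle']] := raise_step hs hse hle hne'.
have hs' := add_sized hs hv.
have hst' := cle_stable hs' hse hle' hst.
apply: (mr_step (c' := add_grain a v)).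
  by exists v; split => //; split => //; constructor.
apply: IH => //.
have := cle_sum hs' hse hle'; have := add_sum hs hv; lia.
Qed.

Lemma raise_list k a e : sumn e.1 + sumn e.2 - (sumn a.1 + sumn a.2) < k ->
  sized a -> sized e -> cle a e -> exists vs, all (valid_vertex m n) vs /\ add_grains a vs = e.
Proof.
elim: k a => // k IH a hk hs hse hle.
case: (eqVneq a e) => [->|hne]; first by exists [::].
have hne' : a <> e by move=> E; rewrite E eqxx in hne.
have [v [hv hle']] := raise_step hs hse hle hne'.
have hs' := add_sized hs hv.
have [|vs [h1 h2]] := IH (add_grain a v) _ hs' hse hle'.
  have := cle_sum hs' hse hle'; have := add_sum hs hv; lia.
by exists (v :: vs); rewrite /= hv h1 h2.
Qed.

Definition cmax : config := (nseq m n.-1, nseq n m).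

Lemma cmax_sized : sized cmax.
Proof. by rewrite /sized /= !size_nseq. Qed.

Lemma cmax_stable : stable_config m n cmax.
Proof. rewrite /stable_config /= !all_nseq; apply/andP; split; apply/orP; right; lia. Qed.

Lemma to_cmax c : sized c -> stable_config m n c -> mc_reach m n c cmax.
Proof.
move=> hs hst; apply: (raise_mc (k := (sumn cmax.1 + sumn cmax.2 - (sumn c.1 + sumn c.2)).+1)) => //;
  [exact: cmax_sized| |exact: cmax_stable].
move: hs hst; case: c => t b [/= h1 h2] /andP [/(all_nthP 0) A /(all_nthP 0) B].
split => i /=; rewrite nth_nseq; case: ltnP => hi.
- have := A i; rewrite /= h1; lia.
- by rewrite nth_default // h1.
- have := B i; rewrite /= h2; lia.
- by rewrite nth_default // h2.
Qed.


Definition fsc (c : config) := exists P Q, 0 < P /\ 0 < Q /\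
  P <= count (fun x => x < Q) c.1 /\ Q <= count (fun x => x < P) c.2.









Lemma fsc_topple c v : sized c -> valid_vertex m n v -> unstable_at m n c v ->
  fsc (topple m n c v) -> fsc c.
Proof.
case: c => t b [/= h1 h2]; case: v => i /= hv hu [P [Q [hP [hQ [H1 H2]]]]]; simpl in *; rewrite /fsc /=.
- rewrite count_mapS // in H2.
  have ct := count_setn (fun x => x < Q) (nth 0 t i - n) (ltac:(lia) : i < size t).
  case E: (nth 0 t i - n < Q); rewrite E /= in ct.
  + case: (ltnP 1 P) => hP1.
      exists P.-1, Q; split; first lia; split => //; split => //.
      move: ct; case: (nth 0 t i < Q) => /=; lia.
    have HP : P = 1 by lia.
    by move: H2; rewrite HP count_lt0; lia.
  + have E' : (nth 0 t i < Q) = false by apply/negbTE; rewrite -leqNgt; move/negbT: E; rewrite -leqNgt; lia.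
    rewrite E' /= in ct.
    exists P, Q; do 3 (split => //); first lia.
    by apply: leq_trans H2 (count_mono _ _); lia.
- rewrite count_mapS // in H1.
  have ct := count_setn (fun x => x < P) (nth 0 b i - m.+1) (ltac:(lia) : i < size b).
  case E: (nth 0 b i - m.+1 < P); rewrite E /= in ct.
  + case: (ltnP 1 Q) => hQ1.
      exists P, Q.-1; split => //; split; first lia; split => //.
      move: ct; case: (nth 0 b i < P) => /=; lia.
    have HQ : Q = 1 by lia.
    by move: H1; rewrite HQ count_lt0; lia.
  + have E' : (nth 0 b i < P) = false by apply/negbTE; rewrite -leqNgt; move/negbT: E; rewrite -leqNgt; lia.
    rewrite E' /= in ct.
    exists P, Q; do 3 (split => //); last lia.
    by apply: leq_trans H1 (count_mono _ _); lia.
Qed.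

Lemma fsc_add c v : sized c -> valid_vertex m n v -> fsc (add_grain c v) -> fsc c.
Proof.
case: c => t b [/= h1 h2]; case: v => i /= hv [P [Q [hP [hQ [H1 H2]]]]]; simpl in *; rewrite /fsc /=.
- have ct := count_setn (fun x => x < Q) (nth 0 t i).+1 (ltac:(lia) : i < size t).
  exists P, Q; do 3 (split => //); move: ct H1 => /=.
  case: (ltnP (nth 0 t i).+1 Q); case: (ltnP (nth 0 t i) Q) => /=; lia.
- have ct := count_setn (fun x => x < P) (nth 0 b i).+1 (ltac:(lia) : i < size b).
  exists P, Q; do 3 (split => //); move: ct H2 => /=.
  case: (ltnP (nth 0 b i).+1 P); case: (ltnP (nth 0 b i) P) => /=; lia.
Qed.

Lemma tr_fsc a d : topple_reach m n a d -> sized a -> fsc d -> fsc a.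
Proof.
elim => // c v d' hv hu _ IH hs hf; apply: (fsc_topple hs hv hu).
by apply: IH => //; exact: topple_sized.
Qed.

Lemma mc_fsc a d : mc_reach m n a d -> sized a -> fsc d -> fsc a.
Proof.
elim => // c c' d' [v [hv [h1 h2]]] _ IH hs hf.
have hs1 := add_sized hs hv.
apply: (fsc_add hs hv); apply: (tr_fsc h1 hs1); apply: IH => //; exact: tr_sized h1 hs1.
Qed.

Lemma cmax_nfsc : ~ fsc cmax.
Proof.
move=> [P [Q [hP [hQ [H1 H2]]]]]; move: H1 H2; rewrite /= !count_nseq.
case: (ltnP m P) => /=; case: (ltnP n.-1 Q) => /=; lia.
Qed.

Lemma recurrent_nfsc c : det_recurrent m n c -> ~ fsc c.
Proof.
move=> [/andP [/eqP h1 /eqP h2] [hst H]] hf.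
have hs : sized c by [].
apply: cmax_nfsc; apply: (mc_fsc (H _ (to_cmax hs hst))) => //; exact: cmax_sized.
Qed.

Definition goodc (c : config) := forall P Q, 0 < P -> P <= m -> 0 < Q -> Q <= n ->
  Q <= nth 0 c.1 P.-1 \/ P <= nth 0 c.2 Q.-1.



Lemma nfsc_good c : sized c -> sorted_config c -> ~ fsc c -> goodc c.
Proof.
case: c => t b [/= h1 h2] /andP [st sb] hf P Q hP hPm hQ hQn /=.
case: (leqP Q (nth 0 t P.-1)) => h; first by left.
case: (leqP P (nth 0 b Q.-1)) => h'; first by right.
exfalso; apply: hf; exists P, Q; do 2 (split => //); split.
  by apply: count_sorted => //; rewrite h1.
by apply: count_sorted => //; rewrite h2.
Qed.


Definition Xb (c : config) p q : config :=
  (mkseq (fun i => nth 0 c.1 i + q - (if m - p <= i then n else 0)) m,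
   mkseq (fun j => nth 0 c.2 j + 1 + p - (if n - q <= j then m.+1 else 0)) n).

Ltac msimp := rewrite ?(nth_setn, nth_mapS, size_set_nth, size_map, size_mkseq, nth_mkseq).

Lemma burn c : sized c -> goodc c -> forall k p q, m - p + (n - q) = k -> p <= m -> q <= n ->
  (forall i, m - p <= i < m -> n <= nth 0 c.1 i + q) ->
  (forall j, n - q <= j < n -> m <= nth 0 c.2 j + p) ->
  topple_reach m n (Xb c p q) (Xb c m n).
Proof.
case: c => t b [/= h1 h2] hg; elim => [|k IH] p q hk hp hq It Ib.
  have -> : p = m by lia. have -> : q = n by lia. by constructor.
case E1: ((p < m) && (n <= nth 0 t (m - p - 1) + q)).
  move/andP: E1 => [hpm ht].
  have E : topple m n (Xb (t, b) p q) (VTop (m - p - 1)) = Xb (t, b) p.+1 q.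
    rewrite /Xb /=; congr (_, _); apply: (@eq_from_nth _ 0); msimp; try lia;
      move=> x hx; msimp; try lia; rewrite ?(nth_mkseq 0) //=; try lia;
      repeat (case: eqP => //=; intros; subst); repeat (case: ifP => //=; intros); try lia;
      try (rewrite nth_mkseq; [|lia]); repeat (case: ifP => //=; intros); try lia.
    by have := Ib x; lia.
  apply: (tr_step (v := VTop (m - p - 1))); first (rewrite /=; lia).
    rewrite /= nth_mkseq /=; last lia. case: ifP => H; lia.
  rewrite E; apply: IH => //; try lia.
  move=> i hi; case: (eqVneq i (m - p - 1)) => [->|hne] //; apply: It; lia.
  move=> j hj; have := Ib j hj; lia.
case E2: ((q < n) && (m <= nth 0 b (n - q - 1) + p)).
  move/andP: E2 => [hqn hb].
  have E3 : topple m n (Xb (t, b) p q) (VBot (n - q - 1)) = Xb (t, b) p q.+1.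
    rewrite /Xb /=; congr (_, _); apply: (@eq_from_nth _ 0); msimp; try lia;
      move=> x hx; msimp; try lia; rewrite ?(nth_mkseq 0) //=; try lia;
      repeat (case: eqP => //=; intros; subst); repeat (case: ifP => //=; intros); try lia;
      try (rewrite nth_mkseq; [|lia]); repeat (case: ifP => //=; intros); try lia.
    by have := It x; lia.
  apply: (tr_step (v := VBot (n - q - 1))); first (rewrite /=; lia).
    rewrite /= nth_mkseq /=; last lia. case: ifP => H; lia.
  rewrite E3; apply: IH => //; try lia.
  move=> i hi; have := It i hi; lia.
  move=> j hj; case: (eqVneq j (n - q - 1)) => [->|hne] //; apply: Ib; lia.
exfalso.
case: (ltnP p m) => hpm; case: (ltnP q n) => hqn.
- have [] := hg (m - p) (n - q) ltac:(lia) ltac:(lia) ltac:(lia) ltac:(lia) => /= H.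
    move/negbT: E1; rewrite negb_and hpm /= -ltnNge; have -> : m - p - 1 = (m - p).-1 by lia. lia.
  move/negbT: E2; rewrite negb_and hqn /= -ltnNge; have -> : n - q - 1 = (n - q).-1 by lia. lia.
- move/negbT: E1; rewrite negb_and hpm /= -ltnNge; lia.
- move/negbT: E2; rewrite negb_and hqn /= -ltnNge; lia.
- lia.
Qed.


Definition addb (c : config) : config := (c.1, map S c.2).

Lemma addb_sized c : sized c -> sized (addb c).
Proof. by case: c => t b [h1 h2]; rewrite /sized /= size_map. Qed.

Lemma topple_addb a v : sized a -> valid_vertex m n v -> unstable_at m n a v ->
  unstable_at m n (addb a) v /\ topple m n (addb a) v = addb (topple m n a v).
Proof.
case: a => t b [/= h1 h2]; case: v => i /= hv hu; split => //; msimp; rewrite ?h2 ?hv; try lia.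
congr (_, _); apply: (@eq_from_nth _ 0); msimp; try lia; move=> x hx; msimp;
  repeat (case: eqP => //=; intros; subst); repeat (case: ltnP => //=; intros); lia.
Qed.

Lemma tr_addb a b : topple_reach m n a b -> sized a -> topple_reach m n (addb a) (addb b).
Proof.
elim => [c|c v d hv hu _ IH] hs; first by constructor.
have [h1 h2] := topple_addb hs hv hu.
apply: (tr_step (v := v)) => //; rewrite h2; apply: IH; exact: topple_sized.
Qed.

Lemma tr_iter_addb k a b : topple_reach m n a b -> sized a ->
  topple_reach m n (iter k addb a) (iter k addb b).
Proof.
elim: k => //= k IH hab hs; apply: tr_addb; first exact: IH.
elim: k {IH} => //= k IH; exact: addb_sized.
Qed.

Lemma iter_addb_sized k a : sized a -> sized (iter k addb a).
Proof. by move=> hs; elim: k => //= k IH; exact: addb_sized. Qed.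

Lemma Xb00 c : sized c -> Xb c 0 0 = addb c.
Proof.
case: c => t b [/= h1 h2]; rewrite /Xb /addb /=; congr (_, _); apply: (@eq_from_nth _ 0); msimp;
  rewrite ?h1 ?h2 // => x hx; msimp; rewrite ?h1 ?h2 //; repeat (case: ifP => //=; intros); lia.
Qed.

Lemma Xbmn c : sized c -> Xb c m n = c.
Proof.
case: c => t b [/= h1 h2]; rewrite /Xb /=; congr (_, _); apply: (@eq_from_nth _ 0); msimp;
  rewrite ?h1 ?h2 // => x hx; msimp; rewrite ?h1 ?h2 //; repeat (case: ifP => //=; intros); lia.
Qed.

Lemma burn_all c : sized c -> goodc c -> topple_reach m n (addb c) c.
Proof.
move=> hs hg; rewrite -Xb00 // -{2}(Xbmn hs).
apply: (burn hs hg (k := m - 0 + (n - 0))) => //; lia.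
Qed.

Lemma iter_burn k c : sized c -> goodc c -> topple_reach m n (iter k addb c) c.
Proof.
move=> hs hg; elim: k => [|k IH]; first by constructor.
rewrite iterSr; apply: tr_trans IH; apply: tr_iter_addb => //; last exact: addb_sized.
exact: burn_all.
Qed.

Lemma iter_addb_eq k c : iter k addb c = (c.1, map (addn k) c.2).
Proof.
elim: k => [|k IH] /=; first by rewrite map_id_in //; case: c.
rewrite IH /addb /= -map_comp; congr (_, _); apply: eq_map => x /=; lia.
Qed.

Definition Yb (c : config) K q : config :=
  (map (addn q) c.1, mkseq (fun j => nth 0 c.2 j + K - (if j < q then m.+1 else 0)) n).

Lemma fire_bottoms c K q : sized c -> m < K -> q <= n ->
  topple_reach m n (Yb c K 0) (Yb c K q).
Proof.
case: c => t b [/= h1 h2] hK; elim: q => [|q IH] hq; first by constructor.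
apply: tr_trans (IH ltac:(lia)) _.
have E : topple m n (Yb (t, b) K q) (VBot q) = Yb (t, b) K q.+1.
  rewrite /Yb /=; congr (_, _).
    by rewrite -map_comp; apply: eq_map => x /=; lia.
  apply: (@eq_from_nth _ 0); msimp; try lia; move=> x hx; msimp; try lia;
    repeat (case: eqP => //=; intros; subst); repeat (case: ltnP => //=; intros);
    rewrite ?nth_mkseq; try lia; repeat (case: ltnP => //=; intros); lia.
apply: (tr_step (v := VBot q)); first (rewrite /=; lia).
  rewrite /= nth_mkseq ?ltnn; lia.
rewrite E; constructor.
Qed.

Lemma good_recurrent c : sized c -> stable_config m n c -> goodc c -> det_recurrent m n c.
Proof.
case: c => t b hs hst hg.
have hmc : mc_reach m n cmax (t, b).
  pose K := (m + m).+1.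
  pose e : config := (map (addn n) t, map (addn m) b).
  have hA : topple_reach m n (iter K addb (t, b)) (t, b) by apply: iter_burn.
  have hAe : topple_reach m n (iter K addb (t, b)) e.
    have -> : iter K addb (t, b) = Yb (t, b) K 0.
      rewrite iter_addb_eq /Yb; case: hs => /= h1 h2.
      congr (_, _); first by rewrite map_id_in.
      apply: (@eq_from_nth _ 0); msimp; rewrite ?h2 // => x hx; msimp; rewrite ?h2 //.
      by rewrite (nth_map 0) //=; lia.
    have -> : e = Yb (t, b) K n.
      rewrite /Yb /e; case: hs => /= h1 h2.
      congr (_, _); apply: (@eq_from_nth _ 0); msimp; rewrite ?h2 // => x hx; msimp; rewrite ?h2 //.
      by rewrite (nth_map 0) //=; case: ltnP => H; lia.
    apply: fire_bottoms => //; lia.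
  have hes : sized e by case: hs => h1 h2; rewrite /sized /= !size_map.
  have hec : topple_reach m n e (t, b) by apply: (confl hA) => //; exact: iter_addb_sized.
  have hle : cle cmax e.
    case: hs => /= h1 h2; move/andP: hst => [/(all_nthP 0) A /(all_nthP 0) B]; rewrite /cle /e.
    split => i /=; rewrite nth_nseq; case: ltnP => hi //; rewrite (nth_map 0); try lia.
  have [vs [hvs he]] := raise_list (k := (sumn e.1 + sumn e.2 - (sumn cmax.1 + sumn cmax.2)).+1)
    (ltnSn _) cmax_sized hes hle.
  apply: (decompose cmax_sized cmax_stable hvs) => //; by rewrite he.
split; first by case: hs => h1 h2; rewrite /is_config h1 h2 !eqxx.
split => // d hd.
have [hsd hstd] := mc_inv hd hs hst.
exact: mc_trans (to_cmax hsd hstd) hmc.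
Qed.

End Sand.


Lemma upper_shift c hs : upper_path c.+1 (map S hs) = upper_path c hs.
Proof. by elim: hs c => //= h hs IH c; rewrite subSS IH. Qed.

Lemma upper_S0 s : s != [::] -> upper_path 0 (map S s) = N :: upper_path 0 s.
Proof. by case: s => // h hs _ /=; rewrite !subn0 upper_shift. Qed.

Lemma lower_shift xe c xs : lower_path xe.+1 c.+1 (map S xs) = lower_path xe c xs.
Proof. by elim: xs c => [|x xs IH] c /=; rewrite subSS // IH. Qed.

Lemma lower_S0 xe s : lower_path xe.+1 0 (map S s) = E :: lower_path xe 0 s.
Proof. by case: s => [|h hs] /=; rewrite !subn0 // lower_shift. Qed.

Definition ZW (T B : seq nat) : seq mstep :=
  map xi_letter (zip (upper_path 0 T) (lower_path (last 0 B) 0 B)).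

Lemma last_mapS (s : seq nat) : s != [::] -> last 0 (map S s) = (last 0 s).+1.
Proof. by case: s => // x s _ /=; rewrite last_map. Qed.

Lemma last0cons (s : seq nat) : last 0 (0 :: s) = last 0 s.
Proof. by case: s. Qed.

Lemma ZW_U T0 B0 : T0 != [::] -> B0 != [::] -> ZW (map S T0) (map S B0) = U :: ZW T0 B0.
Proof. by move=> h1 h2; rewrite /ZW last_mapS // upper_S0 // lower_S0. Qed.

Lemma ZW_HE T' B0 : B0 != [::] -> ZW (0 :: T') (map S B0) = HE :: ZW T' B0.
Proof. by move=> h2; rewrite /ZW last_mapS // lower_S0. Qed.

Lemma ZW_HN T0 B' : T0 != [::] -> ZW (map S T0) (0 :: B') = HN :: ZW T0 B'.
Proof. by move=> h1; rewrite /ZW last0cons upper_S0. Qed.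

Lemma ZW_D T' B' : ZW (0 :: T') (0 :: B') = D :: ZW T' B'.
Proof. by rewrite /ZW last0cons. Qed.

Lemma ZW_nilT B : ZW [::] B = [::].
Proof. by rewrite /ZW /=; case: (lower_path _ _ _). Qed.

Lemma ZW_nilB T : ZW T [::] = [::].
Proof. by rewrite /ZW /=; case: (upper_path 0 T). Qed.

Lemma sorted_predn (s : seq nat) : sorted leq s -> sorted leq (map predn s).
Proof. rewrite sorted_map; apply: sub_sorted => x y /=; lia. Qed.

Lemma sorted_mapS (s : seq nat) : sorted leq (map S s) = sorted leq s.
Proof. by rewrite sorted_map. Qed.

Lemma pos_split t T' : sorted leq (t.+1 :: T') ->
  exists T0, t.+1 :: T' = map S T0 /\ sorted leq T0 /\ T0 != [::].
Proof.
move=> hs; exists (map predn (t.+1 :: T')); split; last split.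
- rewrite -map_comp map_id_in // => x /=.
  have := order_path_min leq_trans hs; rewrite inE => /allP H /orP [/eqP ->|/H] //=; lia.
- exact: sorted_predn.
- by [].
Qed.

Lemma head_le_sumn (s : seq nat) : head 0 s <= sumn s.
Proof. case: s => //= x s; lia. Qed.

Lemma mapSK (s : seq nat) : map predn (map S s) = s.
Proof. by elim: s => //= x s ->. Qed.

Lemma loop_a_spec k T B w : sorted leq T -> sorted leq B -> T != [::] -> B != [::] ->
  head 0 T < k ->
  exists T1 B1 j, loop_a k T B w = (T1, B1, w ++ nseq j U) /\ ZW T B = nseq j U ++ ZW T1 B1 /\
    sorted leq T1 /\ sorted leq B1 /\ size T1 = size T /\ size B1 = size B /\
    T1 != [::] /\ B1 != [::] /\ ((head 0 T1 == 0) || (head 0 B1 == 0)).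
Proof.
elim: k T B w => // k IH [|t T'] [|b B'] w // hT hB _ _ hk.
case: t hT hk => [|t] hT hk.
  by exists (0 :: T'), (b :: B'), 0; rewrite cats0.
case: b hB => [|b] hB.
  by exists (t.+1 :: T'), (0 :: B'), 0; rewrite cats0 orbT.
have [T0 [ET [sT0 nT0]]] := pos_split hT.
have [B0 [EB [sB0 nB0]]] := pos_split hB.
have [|T1 [B1 [j [E1 [E2 [s1 [s2 [z1 [z2 [n1 [n2 h]]]]]]]]]]] := IH T0 B0 (rcons w U) sT0 sB0 nT0 nB0.
  by move: ET hk; case: T0 {sT0 nT0} => // x s [-> _] /=.
exists T1, B1, j.+1; split.
  have ET' : t :: map predn T' = T0 by rewrite -(mapSK T0) -ET.
  have EB' : b :: map predn B' = B0 by rewrite -(mapSK B0) -EB.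
  by rewrite /= ET' EB' E1 cat_rcons.
split; first by rewrite ET EB ZW_U // E2.
by rewrite z1 z2 ET EB !size_map.
Qed.

Lemma outer_unfold f T B w : outer_loop f.+1 T B w =
  if (T != [::]) && (B != [::]) then
    (let: (T1, B1, w1) := loop_a (sumn T).+1 T B w in
     let: (T2, B2, w2) := step_b T1 B1 w1 in outer_loop f T2 B2 w2)
  else w.
Proof. by []. Qed.

Lemma outer_spec f T B w : sorted leq T -> sorted leq B -> size T + size B < f ->
  outer_loop f T B w = w ++ ZW T B.
Proof.
elim: f T B w => // f IH T B w hT hB hf; rewrite outer_unfold.
case: T hT hf => [|t T'] hT hf; first by rewrite /= ZW_nilT cats0.
case: B hB hf => [|b B'] hB hf; first by rewrite /= ZW_nilB cats0.
have -> : ((t :: T') != [::]) && ((b :: B') != [::]) = true by [].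
have [T1 [B1 [j [E1 [E2 [s1 [s2 [z1 [z2 [n1 [n2 h]]]]]]]]]]] :=
  loop_a_spec (k := (sumn (t :: T')).+1) w hT hB isT isT (leq_ltn_trans (head_le_sumn _) (ltnSn _)).
rewrite E1 E2.
case: T1 E1 E2 s1 z1 n1 h => // t1 T1 E1 E2 s1 z1 n1.
case: B1 E1 E2 s2 z2 n2 => // b1 B1 E1 E2 s2 z2 n2 /= h.
clear n1 n2.
case: t1 s1 E2 E1 h z1 => [|t1] s1 E2 E1 h z1; case: b1 s2 E2 E1 h z2 => [|b1] s2 E2 E1 h z2 /=.
- rewrite ZW_D IH //; first by rewrite -cats1 -!catA.
  + exact: path_sorted s1.
  + exact: path_sorted s2.
  + move: z1 z2 hf => /= z1 z2; lia.
- have [B0 [EB [sB0 nB0]]] := pos_split s2.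
  have EB' : b1 :: map predn B1 = B0 by rewrite -(mapSK B0) -EB.
  rewrite EB' EB ZW_HE // IH //; first by rewrite -cats1 -!catA.
  + exact: path_sorted s1.
  + move: z1 z2 hf; rewrite EB size_map /= => z1 z2; lia.
- have [T0 [ET [sT0 nT0]]] := pos_split s1.
  have ET' : t1 :: map predn T1 = T0 by rewrite -(mapSK T0) -ET.
  rewrite ET' ET ZW_HN // IH //; first by rewrite -cats1 -!catA.
  + exact: path_sorted s2.
  + move: z1 z2 hf; rewrite ET size_map /= => z1 z2; lia.
- by [].
Qed.

Lemma run_spec n c : sorted leq (rcons c.1 n.-1) -> sorted leq c.2 ->
  run_algorithm n c = ZW (rcons c.1 n.-1) c.2.
Proof. by move=> h1 h2; rewrite /run_algorithm outer_spec. Qed.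

Fixpoint inv (w : seq mstep) : seq nat * seq nat :=
  match w with
  | [::] => ([::], [::])
  | s :: w' =>
    let: (T, B) := inv w' in
    match s with
    | U => (map S T, map S B)
    | HE => (0 :: T, map S B)
    | HN => (map S T, 0 :: B)
    | D => (0 :: T, 0 :: B)
    end
  end.

Definition droplast (w : seq mstep) := take (size w).-1 w.

Lemma droplast_cons x w : 0 < size w -> droplast (x :: w) = x :: droplast w.
Proof. by case: w. Qed.

Lemma ZW_nonnil T B : T != [::] -> B != [::] -> 0 < size (ZW T B).
Proof.
case: T => // t T _; case: B => // b B _.
by rewrite /ZW size_map size_zip /= !size_cat /=; lia.
Qed.

Lemma nonnil_size (s : seq nat) : s != [::] -> 0 < size s.
Proof. by case: s. Qed.

Definition Inv1 (T B : seq nat) := [/\ T != [::], B != [::], sorted leq T, sorted leq B &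
  last 0 T + size T = last 0 B + size B].

Lemma sorted_last (x : nat) s : path leq x s -> x <= last x s.
Proof. elim: s x => //= y s IH x /andP [h1 h2]; have := IH _ h2; lia. Qed.

Lemma last_ge (s : seq nat) : sorted leq s -> s != [::] -> head 0 s <= last 0 s.
Proof. by case: s => // x s /= h _; apply: sorted_last. Qed.

Lemma mapS_pos (s : seq nat) : s != [::] -> 0 < last 0 (map S s).
Proof. by move=> h; rewrite last_mapS. Qed.

Lemma ZW_inv k T B : sumn T + sumn B + size T + size B < k -> Inv1 T B ->
  ZW T B = droplast (ZW T B) ++ [:: D] /\ inv (ZW T B) = (T, B).
Proof.
elim: k T B => // k IH [|t T'] [|b B'] hk [] // _ _ hT hB hl.
case: t hT hl hk => [|t] hT hl hk; case: b hB hl hk => [|b] hB hl hk.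
- case: T' hT hl hk => [|t' T'] hT hl hk.
    case: B' hB hl hk => [|b' B'] hB hl hk; last by move: hl => /=; lia.
    by rewrite ZW_D ZW_nilT.
  case: B' hB hl hk => [|b' B'] hB hl hk; first by move: hl => /=; lia.
  rewrite ZW_D droplast_cons; last by apply: ZW_nonnil.
  have hk' : sumn (t' :: T') + sumn (b' :: B') + size (t' :: T') + size (b' :: B') < k.
    move: hk => /=; lia.
  have hI : Inv1 (t' :: T') (b' :: B').
    split => //; try (exact: path_sorted hT); try (exact: path_sorted hB); by move: hl => /=; lia.
  have [E1 E2] := IH _ _ hk' hI.
  by rewrite /= E2 -E1.
- have [B0 [EB [sB0 nB0]]] := pos_split hB.
  case: T' hT hl hk => [|t' T'] hT hl hk.
    by move: hl (nonnil_size nB0); rewrite EB /= size_map last_mapS //; lia.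
  rewrite EB ZW_HE // droplast_cons; last by apply: ZW_nonnil.
  have hk' : sumn (t' :: T') + sumn B0 + size (t' :: T') + size B0 < k.
    move: hk; rewrite EB sumn_mapS size_map /=; case: B0 {EB sB0 hl} nB0 => //= x s _; lia.
  have hI : Inv1 (t' :: T') B0.
    split => //; try (exact: path_sorted hT); try (exact: path_sorted hB).
    by move: hl; rewrite EB /= size_map last_mapS //; lia.
  have [E1 E2] := IH _ _ hk' hI.
  by rewrite /= E2 -E1.
- have [T0 [ET [sT0 nT0]]] := pos_split hT.
  case: B' hB hl hk => [|b' B'] hB hl hk.
    by move: hl (nonnil_size nT0); rewrite ET /= size_map last_mapS //; lia.
  rewrite ET ZW_HN // droplast_cons; last by apply: ZW_nonnil.
  have hk' : sumn T0 + sumn (b' :: B') + size T0 + size (b' :: B') < k.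
    move: hk; rewrite ET sumn_mapS size_map /=; case: T0 {ET sT0 hl} nT0 => //= x s _; lia.
  have hI : Inv1 T0 (b' :: B').
    split => //; try (exact: path_sorted hT); try (exact: path_sorted hB).
    by move: hl; rewrite ET /= size_map last_mapS //; lia.
  have [E1 E2] := IH _ _ hk' hI.
  by rewrite /= E2 -E1.
- have [T0 [ET [sT0 nT0]]] := pos_split hT.
  have [B0 [EB [sB0 nB0]]] := pos_split hB.
  rewrite ET EB ZW_U // droplast_cons; last by apply: ZW_nonnil.
  have hk' : sumn T0 + sumn B0 + size T0 + size B0 < k.
    move: hk; rewrite ET EB !sumn_mapS !size_map.
    case: T0 {ET sT0 hl} nT0 => //= x s _; lia.
  have hI : Inv1 T0 B0.
    split => //; by move: hl; rewrite ET EB !size_map !last_mapS //; lia.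
  have [E1 E2] := IH _ _ hk' hI.
  by rewrite /= E2 -E1.
Qed.

Definition good (T B : seq nat) h := forall P Q, 0 < P -> P < size T -> 0 < Q -> Q <= size B ->
  Q <= nth 0 T P.-1 + h \/ P <= nth 0 B Q.-1 + h.

Ltac gsolve := rewrite ?nth_mapS ?size_map; repeat (case: ifP => //=; intros); lia.

Lemma good_U T0 B0 h : good (map S T0) (map S B0) h <-> good T0 B0 h.+1.
Proof.
split => G P Q hP hPT hQ hQB.
  have := G P Q hP _ hQ _; rewrite !size_map => /(_ hPT hQB); rewrite ?nth_mapS ?size_map; case: ifP => H1; case: ifP => H2; lia.
rewrite size_map in hPT; rewrite size_map in hQB.
have := G P Q hP hPT hQ hQB; gsolve.
Qed.

Lemma good_HE T' B0 h : good (0 :: T') (map S B0) h <-> good T' B0 h.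
Proof.
split => G P Q hP hPT hQ hQB.
  have := G P.+1 Q isT _ hQ _; rewrite /= !size_map => /(_ ltac:(lia) hQB).
  case: P hP {hPT} => // P _ /=; gsolve.
rewrite size_map in hQB.
case: P hP hPT => // [[|P]] _ /= hPT.
  by right; move: hQB; gsolve.
have := G P.+1 Q isT ltac:(lia) hQ hQB; gsolve.
Qed.

Lemma good_HN T0 B' h : good (map S T0) (0 :: B') h <-> good T0 B' h.
Proof.
split => G P Q hP hPT hQ hQB.
  have := G P Q.+1 hP _ isT _; rewrite /= !size_map => /(_ hPT ltac:(lia)).
  case: Q hQ {hQB} => // Q _ /=; move: hPT; gsolve.
rewrite size_map in hPT.
case: Q hQ hQB => // [[|Q]] _ /= hQB.
  by left; move: hPT; gsolve.
have := G P Q.+1 hP hPT isT ltac:(lia); gsolve.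
Qed.

Lemma good_D T' B' h : good (0 :: T') (0 :: B') h.+1 <-> good T' B' h.
Proof.
split => G P Q hP hPT hQ hQB.
  have := G P.+1 Q.+1 isT _ isT _; rewrite /= => /(_ ltac:(lia) ltac:(lia)).
  case: P hP {hPT} => // P _; case: Q hQ {hQB} => // Q _ /=; lia.
case: P hP hPT => // [[|P]] _ /= hPT; first by right; lia.
case: Q hQ hQB => // [[|Q]] _ /= hQB; first by left; lia.
have := G P.+1 Q.+1 isT ltac:(lia) isT ltac:(lia); rewrite /=; lia.
Qed.

Lemma good_D0 T' B' : T' != [::] -> ~ good (0 :: T') (0 :: B') 0.
Proof.
move=> hT G; have := G 1 1 isT _ isT isT; rewrite /=.
by case: T' hT {G} => // x s _ /(_ isT) [].
Qed.

Lemma main_ind k T B h : sumn T + sumn B + size T + size B < k -> Inv1 T B ->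
  h + last 0 T + 1 = size B ->
  (motz_ok h (droplast (ZW T B)) <-> good T B h) /\
  (good T B h -> area2 h (droplast (ZW T B)) + h * h + 2 * size T * size B =
     2 * (sumn T + sumn B) + 2 * (size T + size B) * h + 2).
Proof.
elim: k T B h => // k IH [|t T'] [|b B'] h hk [] // _ _ hT hB hl hh.
case: t hT hl hk hh => [|t] hT hl hk hh; case: b hB hl hk hh => [|b] hB hl hk hh.
- case: T' hT hl hk hh => [|t' T'] hT hl hk hh.
    case: B' hB hl hk hh => [|b' B'] hB hl hk hh; last by move: hl => /=; lia.
    rewrite ZW_D ZW_nilT /droplast /=.
    have -> : h = 0 by move: hh => /=; lia.
    split; last by move=> _; lia.
    by split => // _ P Q /=; lia.
  case: B' hB hl hk hh => [|b' B'] hB hl hk hh; first by move: hl => /=; lia.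
  rewrite ZW_D droplast_cons; last by apply: ZW_nonnil.
  case: h hh => [|h] hh.
    have nG : ~ good (0 :: t' :: T') (0 :: b' :: B') 0 by apply: good_D0.
    split; last by move=> G; case: (nG G).
    by split => // G; case: (nG G).
  have hk' : sumn (t' :: T') + sumn (b' :: B') + size (t' :: T') + size (b' :: B') < k.
    move: hk => /=; lia.
  have hI : Inv1 (t' :: T') (b' :: B').
    split => //; try (exact: path_sorted hT); try (exact: path_sorted hB); by move: hl => /=; lia.
  have [E1 E2] := IH _ _ h hk' hI ltac:(move: hh => /=; lia).
  rewrite good_D; split; first by rewrite -E1.
  move=> G; have := E2 G; move: hl hh => /=; nia.
- have [B0 [EB [sB0 nB0]]] := pos_split hB.
  case: T' hT hl hk hh => [|t' T'] hT hl hk hh.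
    by move: hl (nonnil_size nB0); rewrite EB /= size_map last_mapS //; lia.
  rewrite EB ZW_HE // droplast_cons; last by apply: ZW_nonnil.
  have hk' : sumn (t' :: T') + sumn B0 + size (t' :: T') + size B0 < k.
    move: hk; rewrite EB sumn_mapS size_map /=; case: B0 {EB sB0 hl} nB0 => //= x s _; lia.
  have hI : Inv1 (t' :: T') B0.
    split => //; try (exact: path_sorted hT); try (exact: path_sorted hB).
    by move: hl; rewrite EB /= size_map last_mapS //; lia.
  have [E1 E2] := IH _ _ h hk' hI ltac:(move: hh; rewrite EB size_map /=; lia).
  rewrite good_HE; split; first by rewrite -E1.
  move=> G; have := E2 G; rewrite sumn_mapS size_map /=; nia.
- have [T0 [ET [sT0 nT0]]] := pos_split hT.
  case: B' hB hl hk hh => [|b' B'] hB hl hk hh.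
    by move: hl (nonnil_size nT0); rewrite ET /= size_map last_mapS //; lia.
  rewrite ET ZW_HN // droplast_cons; last by apply: ZW_nonnil.
  have hk' : sumn T0 + sumn (b' :: B') + size T0 + size (b' :: B') < k.
    move: hk; rewrite ET sumn_mapS size_map /=; case: T0 {ET sT0 hl} nT0 => //= x s _; lia.
  have hI : Inv1 T0 (b' :: B').
    split => //; try (exact: path_sorted hT); try (exact: path_sorted hB).
    by move: hl; rewrite ET /= size_map last_mapS //; lia.
  have [E1 E2] := IH _ _ h hk' hI ltac:(move: hh; rewrite ET last_mapS //= ; lia).
  rewrite good_HN; split; first by rewrite -E1.
  move=> G; have := E2 G; rewrite sumn_mapS size_map /=; nia.
- have [T0 [ET [sT0 nT0]]] := pos_split hT.
  have [B0 [EB [sB0 nB0]]] := pos_split hB.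
  rewrite ET EB ZW_U // droplast_cons; last by apply: ZW_nonnil.
  have hk' : sumn T0 + sumn B0 + size T0 + size B0 < k.
    move: hk; rewrite ET EB !sumn_mapS !size_map.
    case: T0 {ET sT0 hl} nT0 => //= x s _; lia.
  have hI : Inv1 T0 B0.
    split => //; by move: hl; rewrite ET EB !size_map !last_mapS //; lia.
  have [E1 E2] := IH _ _ h.+1 hk' hI ltac:(move: hh; rewrite ET EB size_map last_mapS //; lia).
  rewrite good_U; split; first by rewrite -E1.
  move=> G; have := E2 G; rewrite !sumn_mapS !size_map /=; nia.
Qed.


Lemma size_upper cur hs : path leq cur hs -> size (upper_path cur hs) = last cur hs - cur + size hs.
Proof.
elim: hs cur => [|h hs IH] cur /=; first lia.
move=> /andP [h1 h2]; rewrite size_cat size_nseq /= IH //; have := sorted_last h2; lia.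
Qed.

Lemma size_lower xe cur xs : path leq cur xs -> last cur xs <= xe ->
  size (lower_path xe cur xs) = xe - cur + size xs.
Proof.
elim: xs cur => [|x xs IH] cur /=; first by rewrite size_nseq; lia.
move=> /andP [h1 h2] hl; rewrite size_cat size_nseq /= IH //; have := sorted_last h2; lia.
Qed.

Lemma zip_take (A B : Type) k (s : seq A) (t : seq B) : take k (zip s t) = zip (take k s) (take k t).
Proof. elim: s k t => [|x s IH] [|k] [|y t] //=; by rewrite IH. Qed.

Lemma sorted0 (s : seq nat) : sorted leq s -> path leq 0 s.
Proof. by case: s. Qed.

Lemma ZW_size m n (t b : seq nat) : 0 < n -> size t = m -> size b = n ->
  sorted leq (rcons t n.-1) -> sorted leq b -> last 0 b = m ->
  size (upper_path 0 (rcons t n.-1)) = m + n /\ size (lower_path (last 0 b) 0 b) = m + n.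
Proof.
move=> hn h1 h2 sT sB hl; split.
  rewrite size_upper ?sorted0 // last_rcons size_rcons; lia.
rewrite size_lower ?sorted0 //; lia.
Qed.

Lemma Xi_Phi m n c : 0 < n -> size c.1 = m -> size c.2 = n ->
  sorted leq (rcons c.1 n.-1) -> sorted leq c.2 -> last 0 c.2 = m ->
  Xi (Phi m n c) = w_of n c.
Proof.
move=> hn h1 h2 sT sB hl.
have [z1 z2] := ZW_size hn h1 h2 sT sB hl.
rewrite /w_of run_spec // /Xi /Phi /=.
have -> : upper_of n c.1 = N :: upper_path 0 (rcons c.1 n.-1).
  rewrite /upper_of -upper_S0; last by case: (c.1).
  by rewrite map_rcons cats1 prednK.
have -> : lower_of m c.2 = E :: lower_path m 0 c.2 by rewrite /lower_of lower_S0.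
rewrite /inner_steps /= /ZW -hl size_map size_zip z1 z2 minnn -map_take zip_take.
by rewrite -hl in z2; rewrite ?z1 ?z2.
Qed.

Definition isU (s : mstep) := if s is U then true else false.
Definition isD (s : mstep) := if s is D then true else false.
Definition isHN (s : mstep) := if s is HN then true else false.
Definition isHE (s : mstep) := if s is HE then true else false.

Lemma count_UorHE p : count is_UorHE p = count isU p + count isHE p.
Proof. elim: p => //= x p ->; case: x => /=; lia. Qed.

Lemma size_counts p : size p = count isU p + count isD p + count isHN p + count isHE p.
Proof. elim: p => //= x p ->; case: x => /=; lia. Qed.

Lemma motz_counts h p : motz_ok h p -> h + count isU p = count isD p.
Proof.
elim: p h => [|x p IH] h /=; first by move/eqP => ->.
case: x => /=; try (move/IH; lia).
move/andP => [hh /IH]; lia.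
Qed.

Lemma inv_counts p : let: (T, B) := inv (p ++ [:: D]) in
  [/\ T != [::], B != [::], sorted leq T, sorted leq B & ZW T B = p ++ [:: D]] /\
  [/\ size T = count isHE p + count isD p + 1, size B = count isHN p + count isD p + 1,
      last 0 T = count isU p + count isHN p & last 0 B = count isU p + count isHE p].
Proof.
elim: p => [|x p] /=; first by split; split => //; rewrite ZW_D ZW_nilT.
case: (inv (p ++ [:: D])) => T B [[nT nB sT sB Z] [z1 z2 l1 l2]].
have pT : path leq 0 T by apply: sorted0.
have pB : path leq 0 B by apply: sorted0.
case: x => /=; split; split => //; try (by rewrite sorted_mapS); try (by case: (T) nT);
  try (by case: (B) nB); rewrite ?size_map ?last_mapS ?last0cons //; try lia.
- by rewrite ZW_U // Z.
- by rewrite ZW_D Z.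
- by rewrite ZW_HN // Z.
- by rewrite ZW_HE // Z.
Qed.


Lemma path_le_last a (s : seq nat) : path leq a s -> all (fun x => x <= last a s) (a :: s).
Proof.
elim: s a => [|y s IH] a /=; first by rewrite leqnn.
move=> /andP [h1 h2]; have := IH _ h2 => /= /andP [h3 h4].
by rewrite h3 h4 (leq_trans h1 h3).
Qed.

Lemma sorted_le_last (s : seq nat) : sorted leq s -> all (fun x => x <= last 0 s) s.
Proof. by case: s => //= a s h; have := path_le_last h => /= /andP [-> ->]. Qed.

Lemma sorted_rcons_le (s : seq nat) y : sorted leq s -> all (fun x => x <= y) s -> sorted leq (rcons s y).
Proof.
case: s => //= a s hs /andP [ha hall]; rewrite rcons_path hs /=.
have : last a s \in a :: s := mem_last a s.
by rewrite inE => /orP [/eqP ->|/(allP hall)].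
Qed.

Lemma sorted_rcons_inv (s : seq nat) y : sorted leq (rcons s y) -> sorted leq s.
Proof. by case: s => //= a s; rewrite rcons_path => /andP []. Qed.

Lemma sumn_rcons (s : seq nat) y : sumn (rcons s y) = sumn s + y.
Proof. by rewrite -cats1 sumn_cat /=; lia. Qed.

Section Main.
Variables m n : nat.
Hypothesis hn : 0 < n.

Lemma rec_facts c : sorted_recurrent m n c ->
  [/\ size c.1 = m, size c.2 = n, stable_config m n c, sorted leq c.2 & goodc m n c] /\
  [/\ sorted leq (rcons c.1 n.-1), last 0 c.2 = m, Inv1 (rcons c.1 n.-1) c.2 &
      good (rcons c.1 n.-1) c.2 0].
Proof.
case=> sc rec; have hnf := recurrent_nfsc hn rec.
case: rec => /andP [/eqP h1 /eqP h2] [st _].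
have hs : sized m n c by [].
have hg := nfsc_good hs sc hnf.
move: (st) => /andP [/(all_nthP 0) At /(all_nthP 0) Ab].
move: (sc) => /andP [s1 s2].
have sT : sorted leq (rcons c.1 n.-1).
  apply: sorted_rcons_le => //; apply/allP => x hx.
  move: st => /andP [/allP A _]; have := A x hx; lia.
have hl : last 0 c.2 = m.
  rewrite -nth_last h2.
  case: (posnP m) => hm.
    have := Ab n.-1; rewrite h2 hm; lia.
  have [|] := hg m n hm (leqnn _) hn (leqnn _).
    have := At m.-1; rewrite h1; lia.
  have := Ab n.-1; rewrite h2; lia.
split; split => //.
  split => //; try (by case: (c.1)); try (by rewrite -size_eq0 h2 -lt0n).
  by rewrite last_rcons size_rcons hl h1 h2; lia.
move=> P Q hP hPT hQ hQB; rewrite size_rcons h1 in hPT.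
rewrite nth_rcons h1 ifT; last lia.
have := hg P Q hP ltac:(lia) hQ ltac:(lia); lia.
Qed.

Lemma wof_droplast c : sorted leq (rcons c.1 n.-1) -> sorted leq c.2 ->
  w_of n c = droplast (ZW (rcons c.1 n.-1) c.2).
Proof. by move=> h1 h2; rewrite /w_of run_spec. Qed.

Lemma bigk (T B : seq nat) : sumn T + sumn B + size T + size B < (sumn T + sumn B + size T + size B).+1.
Proof. by []. Qed.

Lemma rec_motz_area c : sorted_recurrent m n c ->
  motz_ok 0 (w_of n c) /\
  area2 0 (w_of n c) + 2 * m.+1 * n = 2 * (sumn c.1 + n.-1 + sumn c.2) + 2.
Proof.
move=> hr; have [[h1 h2 st s2 hg] [sT hl hI hG]] := rec_facts hr.
rewrite wof_droplast //.
have [E1 E2] := main_ind (h := 0) (bigk _ _) hI ltac:(rewrite /= last_rcons h2; lia).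
split; first by apply/E1.
have := E2 hG; rewrite size_rcons h1 h2 sumn_rcons; lia.
Qed.

Lemma rec_ZW c : sorted_recurrent m n c ->
  ZW (rcons c.1 n.-1) c.2 = w_of n c ++ [:: D] /\
  inv (w_of n c ++ [:: D]) = (rcons c.1 n.-1, c.2).
Proof.
move=> hr; have [[h1 h2 st s2 hg] [sT hl hI hG]] := rec_facts hr.
rewrite wof_droplast //.
have [E1 E2] := ZW_inv (bigk _ _) hI.
by rewrite -E1.
Qed.

End Main.

Import GRing.Theory.

Lemma droplast_cat1 (p : seq mstep) x : droplast (p ++ [:: x]) = p.
Proof. by rewrite /droplast size_cat addn1 /= take_size_cat. Qed.

Theorem theorem4p16 (m n : nat) (hn : 0 < n) :
  (forall c : config, sorted_recurrent m n c ->
     w_of n c = Xi (Phi m n c) /\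
     ((level m n c)%:~R : rat) = Area (w_of n c)) /\
  (* c |-> w(c) is a bijection onto Motz_{m,n-1} *)
  (forall c : config, sorted_recurrent m n c -> in_Motz m n (w_of n c)) /\
  (forall c1 c2 : config, sorted_recurrent m n c1 -> sorted_recurrent m n c2 ->
     w_of n c1 = w_of n c2 -> c1 = c2) /\
  (forall p : seq mstep, in_Motz m n p ->
     exists c : config, sorted_recurrent m n c /\ w_of n c = p).
Proof.
split.
  move=> c hr; have [[h1 h2 st s2 hg] [sT hl hI hG]] := rec_facts hn hr.
  have [hm ha] := rec_motz_area hn hr.
  split; first by rewrite (Xi_Phi hn h1 h2 sT s2 hl).
  rewrite /level /Area.
  have Hn : (area2 0 (w_of n c) + 2 * (m * n) = 2 * (sumn c.1 + sumn c.2))%N by move: ha; nia.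
  have := congr1 (fun x : nat => (x%:R : rat)%R) Hn; rewrite /= !natrD => H'.
  rewrite intrB.
  have -> : ((((sumn c.1 + sumn c.2)%N%:Z)%:~R : rat) = (sumn c.1 + sumn c.2)%N%:R)%R by [].
  have -> : ((((m * n)%N%:Z)%:~R : rat) = (m * n)%N%:R)%R by [].
  rewrite natrD; lra.
split.
  move=> c hr; have [[h1 h2 st s2 hg] [sT hl hI hG]] := rec_facts hn hr.
  have [hm _] := rec_motz_area hn hr.
  have [E1 E2] := rec_ZW hn hr.
  have [z1 z2] := ZW_size hn h1 h2 sT s2 hl.
  have hsz : size (ZW (rcons c.1 n.-1) c.2) = m + n by rewrite /ZW size_map size_zip z1 z2 minnn.
  move: (inv_counts (w_of n c)); rewrite E2 => [[_ [_ _ _ l2]]].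
  apply/and3P; split => //.
    by apply/eqP; move: hsz; rewrite E1 size_cat /=; lia.
  by apply/eqP; rewrite count_UorHE -l2.
split.
  move=> [t1 b1] [t2 b2] r1 r2 Ew.
  have [_ A] := rec_ZW hn r1; have [_ B] := rec_ZW hn r2.
  rewrite Ew B /= in A.
  by case: A => /rcons_inj [E1] E2; rewrite E1 E2.
move=> p /and3P [/eqP hsz /eqP hc hm].
have hUD := motz_counts hm; rewrite count_UorHE in hc; have hsp := size_counts p.
move: (inv_counts p); case E: (inv (p ++ [:: D])) => [T B] [[nT nB sT sB Z] [z1 z2 l1 l2]].
case: T E nT sT Z z1 l1 => // x T'' E _ sT Z z1 l1.
have hlast : last x T'' = n.-1 by move: l1 => /= ->; lia.
have hT : rcons (belast x T'') n.-1 = x :: T'' by rewrite lastI hlast.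
pose c : config := (belast x T'', B).
have sT' : sorted leq (rcons c.1 n.-1) by rewrite /= hT.
have hI : Inv1 (x :: T'') B.
  split => //; rewrite z1 z2 l1 l2 /=; lia.
have [E1 _] := main_ind (h := 0) (bigk _ _) hI ltac:(rewrite l1 z2; lia).
have hw : w_of n c = p by rewrite wof_droplast //= hT Z droplast_cat1.
exists c; split => //.
split; first by apply/andP; split => //; exact: sorted_rcons_inv sT'.
have hG : good (x :: T'') B 0 by apply/E1; rewrite Z droplast_cat1.
have hs : sized m n c by rewrite /sized /= size_belast; move: z1 z2 => /= z1 z2; lia.
apply: (good_recurrent hn hs).
  apply/andP; split.
    apply/allP => y /mem_belast hy.
    have := sorted_le_last sT => /allP /(_ y hy); rewrite /= hlast; lia.
  apply/allP => y hy.
  have := sorted_le_last sB => /allP /(_ y hy); rewrite l2; lia.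
move=> P Q hP hPm hQ hQn.
have := hG P Q hP _ hQ _; rewrite -hT size_rcons size_belast nth_rcons size_belast.
move: z1 z2 => /= z1 z2.
rewrite ifT; last lia.
move=> /(_ ltac:(lia) ltac:(lia)); rewrite /= !addn0 //.
Qed.
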